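(* Let $G=(V,E)$ be a connected undirected graph, where $E$ is a set of unordered pairs of distinct vertices. Consider the following two linear programs. (LR), with variables $d_{ij}$ for $i,j\in V$: $$\min_{d}\ \sum_{(i,j)\in E} d_{ij}\quad\text{s.t.}\quad \sum_{i\in V}\sum_{j\in V} d_{ij}\ge 1,\qquad d_{ij}\le d_{ik}+d_{kj}\ \ \forall\, i,j,k\in V\text{ distinct},$$ $$d_{ij}=d_{ji}\ge 0\ \ \forall i,j\in V,\qquad d_{ii}=0\ \ \forall i\in V.$$ (LR\_OL), with variables $b_{ij}$ for $i,j\in V$: $$\min_{b}\ \sum_{(i,j)\in E} b_{ij}\quad\text{s.t.}\quad \sum_{i\in V}\sum_{j\in V} b_{ij}\ge 1,\qquad b_{ij}\le b_{ik}+b_{kj}\ \ \forall\, i,j,k\in V\text{ distinct with }(i,k)\in E,$$ $$b_{ij}=b_{ji}\ge 0\ \ \forall i,j\in V,\qquad b_{ii}=0\ \ \forall i\in V.$$ Let $d^*$ be an optimal solution of (LR) with optimal value $z_{d^*}=\sum_{(i,j)\in E} d^*_{ij}$, and let $b^*$ be an optimal solution of (LR\_OL) with optimal value $z_{b^*}=\sum_{(i,j)\in E} b^*_{ij}$. Then $z_{b^*}=z_{d^*}$. Moreover, from any optimal solution $b^*$ of (LR\_OL) one can construct a feasible solution $d'$ of (LR) (namely $d'_{ij}$ = the shortest-path distance from $i$ to $j$ in $G$ with edge weights $w_{uv}=b^*_{uv}$ for $(u,v)\in E$) such that $d'_{ij}\ge b^*_{ij}$ for all $i,j\in V$ and $d'_{ij}=b^*_{ij}$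 for all $(i,j)\in E$; in particular $d'$ is optimal for (LR).
   Context: In the sums over $(i,j)\in E$, each edge of $E$ is counted via the corresponding variable $d_{ij}$ (resp. $b_{ij}$), these variables being symmetric. A path from $i$ to $j$ in $G$ is a sequence of vertices $i=v_0,\dots,v_m=j$ with $(v_r,v_{r+1})\in E$; its weight is the sum of the edge weights along it. *)

(* Defs.v *)
From HB Require Import structures.
From mathcomp Require Import all_boot all_order all_algebra.
Set Implicit Arguments. Unset Strict Implicit. Unset Printing Implicit Defensive.
Import Order.TTheory GRing.Theory Num.Theory.
Local Open Scope ring_scope.

Section Defs.
Variables (R : realFieldType) (V : finType).

Definition simple_graph (E : rel V) : Prop :=
  (forall i j, E i j = E j i) /\ (forall i, ~~ E i i).

Definition connected_graph (E : rel V) : Prop :=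
  forall i j, connect E i j.

(* Objective: sum over the edges (unordered pairs), each counted once.
   Summing over ordered pairs counts every edge twice, hence the 1/2. *)
Definition objective (E : rel V) (x : V -> V -> R) : R :=
  2^-1 * \sum_(i : V) \sum_(j : V | E i j) x i j.

Definition common_constraints (x : V -> V -> R) : Prop :=
  [/\ 1 <= \sum_(i : V) \sum_(j : V) x i j,
      (forall i j, x i j = x j i),
      (forall i j, 0 <= x i j) &
      (forall i, x i i = 0)].

Definition feasible_LR (d : V -> V -> R) : Prop :=
  common_constraints d /\
  (forall i j k, i != j -> j != k -> i != k -> d i j <= d i k + d k j).

Definition feasible_LR_OL (E : rel V) (b : V -> V -> R) : Prop :=
  common_constraints b /\
  (forall i j k, i != j -> j != k -> i != k -> E i k ->
     b i j <= b i k + b k j).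

Definition optimal_LR (E : rel V) (d : V -> V -> R) : Prop :=
  feasible_LR d /\ forall d', feasible_LR d' -> objective E d <= objective E d'.

Definition optimal_LR_OL (E : rel V) (b : V -> V -> R) : Prop :=
  feasible_LR_OL E b /\
  forall b', feasible_LR_OL E b' -> objective E b <= objective E b'.

(* Weight of the walk i = v_0, v_1, ..., v_m with p = [:: v_1; ...; v_m]. *)
Definition walk_weight (w : V -> V -> R) (i : V) (p : seq V) : R :=
  \sum_(e <- zip (i :: p) p) w e.1 e.2.

Definition is_path (E : rel V) (i j : V) (p : seq V) : Prop :=
  path E i p /\ last i p = j.

Definition is_shortest_path_dist (E : rel V) (w : V -> V -> R) (i j : V)
    (delta : R) : Prop :=
  (exists p, is_path E i j p /\ walk_weight w i p = delta) /\
  (forall p, is_path E i j p -> delta <= walk_weight w i p).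

End Defs.

(* Main.v *)
Require Import Defs.
From HB Require Import structures.
From mathcomp Require Import all_boot all_order all_algebra.
From Stdlib Require Import ClassicalEpsilon.
Import Order.TTheory GRing.Theory Num.Theory.
Set Implicit Arguments. Unset Strict Implicit.
Local Open Scope ring_scope.

Section Aux.
Variables (R : realFieldType) (V : finType).

Fixpoint ww (w : V -> V -> R) (i : V) (p : seq V) : R :=
  if p is x :: p' then w i x + ww w x p' else 0.

Lemma wwE w i p : walk_weight w i p = ww w i p.
Proof.
elim: p i => [|x p IH] i /=; first by rewrite /walk_weight big_nil.
by rewrite /walk_weight big_cons /= -IH.
Qed.

Lemma ww_cat w i p1 p2 : ww w i (p1 ++ p2) = ww w i p1 + ww w (last i p1) p2.
Proof.
elim: p1 i => [|x p IH] i /=; first by rewrite add0r.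
by rewrite IH addrA.
Qed.

Lemma ww_ge0 w i p : (forall a b, 0 <= w a b) -> 0 <= ww w i p.
Proof.
move=> h; elim: p i => [|x p IH] i //=.
by rewrite addr_ge0.
Qed.

Lemma mem_split (s : seq V) y : y \in s -> exists a c, s = a ++ y :: c.
Proof. by case/splitPr => a c; exists a, c. Qed.

Lemma shorten_walk (E : rel V) w (hw : forall a b, 0 <= w a b) p i :
  path E i p -> exists q, [/\ path E i q, last i q = last i p,
                            uniq (i :: q) & ww w i q <= ww w i p].
Proof.
elim: p i => [|x p IH] i.
  by move=> _; exists [::]; split.
move=> /= /andP[Eix Hp].
have [q [Hq Hl Hu Hw]] := IH x Hp.
case: (boolP (i \in x :: q)) => Hi.
  have [a [c Eq]] := mem_split Hi.
  exists c.
  have Hq' : path E i (x :: q) by rewrite /= Eix Hq.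
  rewrite Eq cat_path /= in Hq'.
  move/and3P: Hq' => [_ _ Hc].
  have Hl' : last i (x :: q) = last i (a ++ i :: c) by rewrite Eq.
  rewrite last_cat /= in Hl'.
  have Hu' : uniq (x :: q) by [].
  rewrite Eq cat_uniq in Hu'.
  move/and3P: Hu' => [_ _ Huc].
  split => //; first by rewrite -Hl' -Hl.
  have Hw' : w i x + ww w x q <= w i x + ww w x p by rewrite lerD2l.
  apply: le_trans Hw'.
  have -> : w i x + ww w x q = ww w i (x :: q) by [].
  rewrite Eq ww_cat /= addrA.
  by rewrite lerDr addr_ge0 // ww_ge0.
exists (x :: q); split => //=.
- by rewrite Eix.
- by rewrite Hi.
- by rewrite lerD2l.
Qed.

Fixpoint all_seqs (n : nat) : seq (seq V) :=
  if n is n'.+1 then [::] :: [seq x :: s | x <- enum V, s <- all_seqs n']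
  else [:: [::]].

Lemma all_seqsP n s : (size s <= n)%N -> s \in all_seqs n.
Proof.
elim: n s => [|n IH] [|x s] //=.
move=> hs; rewrite in_cons; apply/orP; right.
by apply: allpairs_f; [rewrite mem_enum | apply: IH].
Qed.

Lemma ex_min (T : eqType) (f : T -> R) (l : seq T) x0 :
  x0 \in l -> exists2 x, x \in l & forall y, y \in l -> f x <= f y.
Proof.
elim: l x0 => [//|a l IH] x0 _.
case Hl: l => [|b l0].
  by exists a; rewrite ?mem_head // => y; rewrite inE => /eqP ->.
have hbl : b \in l by rewrite Hl mem_head.
have [m Hm Hmin] := IH b hbl.
rewrite -Hl.
have [h|h] := leP (f a) (f m).
  exists a; first exact: mem_head.
  move=> y; rewrite inE => /orP[/eqP -> //|/Hmin]; exact: le_trans.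
exists m; first by rewrite inE Hm orbT.
move=> y; rewrite inE => /orP[/eqP -> |/Hmin //]; exact: ltW.
Qed.

End Aux.

Section Main.
Variables (R : realFieldType) (V : finType) (E : rel V) (b : V -> V -> R).

Lemma lower_bound (hG : simple_graph E) (hb : feasible_LR_OL E b) p i :
  path E i p -> b i (last i p) <= ww b i p.
Proof.
case: hb => [[_ _ hge0 hdiag] htri].
elim: p i => [|x p IH] i /=; first by rewrite hdiag.
move=> /andP[Eix Hp]; have {}IH := IH x Hp.
set j := last x p in IH *.
have Hs : b i x + b x j <= b i x + ww b x p by rewrite lerD2l.
apply: le_trans Hs.
case: (eqVneq i j) => [<-|hij]; first by rewrite hdiag addr_ge0.
case: (eqVneq x j) => [<-|hxj]; first by rewrite hdiag addr0.
have hix : i != x.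
  by apply/eqP => eix; move: Eix; rewrite eix; move: (hG.2 x) => /negbTE ->.
by apply: htri => //; rewrite eq_sym.
Qed.

Lemma ex_sp (hconn : connected_graph E) (hge0 : forall i j, 0 <= b i j) i j :
  exists delta, is_shortest_path_dist E b i j delta.
Proof.
pose cands := [seq s <- all_seqs V #|V| | path E i s && (last i s == j)].
have shortc : forall p, path E i p -> last i p = j ->
    exists2 q, q \in cands & ww b i q <= ww b i p.
  move=> p Hp Hl.
  have [q [Hq Hlq Hu Hw]] := shorten_walk hge0 Hp.
  exists q => //.
  rewrite mem_filter Hq Hlq Hl eqxx /=.
  apply: all_seqsP.
  move/card_uniqP: Hu => /= Hc.
  have := max_card (mem (i :: q)); rewrite Hc /=; exact: ltnW.
have [p Hp Hl] := connectP (hconn i j).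
have [q0 Hq0 _] := shortc p Hp (esym Hl).
have [m Hm Hmin] := ex_min (ww b i) Hq0.
move: Hm; rewrite mem_filter => /andP[/andP[Hpm /eqP Hlm] _].
exists (ww b i m); split.
  by exists m; split => //; rewrite wwE.
move=> p' [Hp' Hl']; rewrite wwE.
have [q Hq Hw] := shortc p' Hp' Hl'.
exact: le_trans (Hmin _ Hq) Hw.
Qed.

End Main.

Theorem mainTheorem1 (R : realFieldType) (V : finType) (E : rel V)
    (hG : simple_graph E) (hconn : connected_graph E)
    (dstar bstar : V -> V -> R)
    (hd : optimal_LR E dstar) (hb : optimal_LR_OL E bstar) :
  objective E bstar = objective E dstar /\
  exists d' : V -> V -> R,
    [/\ (forall i j, is_shortest_path_dist E bstar i j (d' i j)),
        feasible_LR d',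
        (forall i j, bstar i j <= d' i j),
        (forall i j, E i j -> d' i j = bstar i j) &
        optimal_LR E d'].
Proof.
have [hbf hbopt] := hb.
have hbf' := hbf.
case: hbf' => [[hsum hsym hge0 hdiag] htri].
pose D i j := proj1_sig (constructive_indefinite_description _ (ex_sp hconn hge0 i j)).
have HD : forall i j, is_shortest_path_dist E bstar i j (D i j).
  by move=> i j; rewrite /D; case: constructive_indefinite_description.
have Hlow : forall i j, bstar i j <= D i j.
  move=> i j; have [[p [[Hp Hl] Hw]] _] := HD i j.
  rewrite -Hw wwE -Hl; exact: (lower_bound hG hbf Hp).
have Hedge : forall i j, E i j -> D i j = bstar i j.
  move=> i j Eij; apply/eqP; rewrite eq_le Hlow andbT.
  have [_ Hm] := HD i j.
  have := Hm [:: j]; rewrite wwE /= addr0; apply; split => //=.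
  by rewrite Eij.
have FOL : forall d : V -> V -> R, feasible_LR d -> feasible_LR_OL E d.
  move=> d [hc ht]; split => // i j k h1 h2 h3 _; exact: ht.
have Hrev : forall p i, path E i p -> exists q,
    [/\ path E (last i p) q, last (last i p) q = i & ww bstar (last i p) q = ww bstar i p].
  elim=> [|x p IH] i /=; first by move=> _; exists [::].
  move=> /andP[Eix Hp]; have [q [Hq Hlq Hw]] := IH x Hp.
  exists (rcons q i); split.
  - by rewrite rcons_path Hq Hlq -hG.1.
  - by rewrite last_rcons.
  - by rewrite -cats1 ww_cat Hlq Hw /= addr0 addrC hsym.
have HDfeas : feasible_LR D.
  split; last first.
    move=> i j k _ _ _.
    have [[p1 [[Hp1 Hl1] Hw1]] _] := HD i k.
    have [[p2 [[Hp2 Hl2] Hw2]] _] := HD k j.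
    have [_ Hm] := HD i j.
    rewrite -Hw1 -Hw2; apply: le_trans (Hm (p1 ++ p2) _) _.
      by split; rewrite ?cat_path ?last_cat Hl1 ?Hp1 ?Hp2.
    by rewrite !wwE ww_cat Hl1.
  split.
  - apply: le_trans hsum _; apply: ler_sum => i _; apply: ler_sum => j _; exact: Hlow.
  - move=> i j; apply/eqP; rewrite eq_le.
    apply/andP; split.
      have [[p [[Hp Hl] Hw]] _] := HD j i.
      have [q [Hq Hlq Hwq]] := Hrev p j Hp.
      have [_ Hm] := HD i j.
      rewrite -Hw; rewrite Hl in Hq Hlq Hwq.
      by rewrite wwE -Hwq -wwE; apply: Hm; split.
    have [[p [[Hp Hl] Hw]] _] := HD i j.
    have [q [Hq Hlq Hwq]] := Hrev p i Hp.
    have [_ Hm] := HD j i.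
    rewrite -Hw; rewrite Hl in Hq Hlq Hwq.
    by rewrite wwE -Hwq -wwE; apply: Hm; split.
  - by move=> i j; apply: le_trans (hge0 i j) (Hlow i j).
  - move=> i; apply/eqP; rewrite eq_le (le_trans (hge0 i i) (Hlow i i)) andbT.
    have [_ Hm] := HD i i.
    by have := Hm [::]; rewrite wwE /=; apply.
have objD : objective E D = objective E bstar.
  rewrite /objective; congr (_ * _); apply: eq_bigr => i _.
  by apply: eq_bigr => j Eij; rewrite Hedge.
have le1 : objective E bstar <= objective E dstar by apply: hbopt; apply: FOL; case: hd.
have le2 : objective E dstar <= objective E D by case: hd => _; apply.
split.
  by apply/eqP; rewrite eq_le le1 -objD le2.
exists D; split => //.
split => // d' Hd'; rewrite objD; exact: hbopt (FOL _ Hd').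
Qed.
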